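(* Let $\mathcal{T}$ be a meager hereditary family, let $l$ be a positive integer and let $\varepsilon>0$. For every $\eta>0$ there exists $n_0$ such that the following holds for all $n\ge n_0$. Let $(G_1,\dots,G_l)$ be vertex-disjoint graphs with $G_i\in\mathcal{T}$ for every $i\in[l]$ such that $\mathcal{X}=(V(G_1),\dots,V(G_l))$ is an $\varepsilon$-balanced partition of $[n]$. Then for at least a $(1-\eta)$-fraction of all extensions $G$ of $(G_1,\dots,G_l)$, the partition $\mathcal{X}$ is the unique $(\mathcal{T},l)$-partition of $G$. (That is: $\mathcal{X}$ is the unique $(\mathcal{T},l)$-partition of $G$ for almost every extension $G$ of $(G_1,\dots,G_l)$.)
   Context: All graphs are finite and simple. A family is hereditary if closed under isomorphism and induced subgraphs. For $s,t\ge0$, $\mathcal{H}(s,t)$ is the family of graphs whose vertex set can be partitioned into $s$ independent sets and $t$ cliques (parts may be empty); $\chi_c(\mathcal{F})$ is the maximum $l$ with $\mathcal{H}(s,l-s)\subseteq\mathcal{F}$ for some $0\le s\le l$. A hereditary family is thin if $\chi_c\le1$, meager if thin and it does not contain some substar and does not contain some antisubstar (substar: subgraph of a star; antisubstar: complement of a substar). A $(\mathcal{T},l)$-partition of $G$ is a partition $(X_1,\dots,X_l)$ of $V(G)$ with $G[X_i]\in\mathcal{T}$ for all $i$. A partition $\mathcal{X}$ of an $n$-element set is $\varepsilon$-balanced if $\big||X|-n/|\mathcal{X}|\big|\le n^{1-\varepsilon}$ for all $X\in\mathcal{X}$. For vertex-disjoint graphs $(G_1,\dots,G_l)$, an extension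 is a graph $G$ with $V(G)=\bigcup_i V(G_i)$ such that each $G_i$ is an induced subgraph of $G$. *)

(* Defs.v *)
From Stdlib Require Import Reals.
From mathcomp Require Import all_boot.
Set Implicit Arguments. Unset Strict Implicit. Unset Printing Implicit Defensive.

Definition graph (n : nat) := {ffun 'I_n * 'I_n -> bool}.

Definition simple n (G : graph n) : bool :=
  [forall x, ~~ G (x, x)] && [forall x, forall y, G (x, y) == G (y, x)].

(* a graph_family of graphs: a predicate on graphs on 'I_n, for every n
   (only its values on simple graphs matter) *)
Definition graph_family := forall n : nat, pred (graph n).

Definition induced n m (G : graph n) (f : 'I_m -> 'I_n) : graph m :=
  [ffun e : 'I_m * 'I_m => G (f e.1, f e.2)].

(* induced subgraph G[A], with vertices relabelled by the enumeration of A *)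
Definition sub n (G : graph n) (A : {set 'I_n}) : graph #|A| :=
  induced G (@enum_val _ (mem A)).

(* hereditary = closed under isomorphism and induced subgraphs, i.e. under
   pulling back along injective maps *)
Definition hereditary (F : graph_family) : Prop :=
  forall n m (G : graph n) (f : 'I_m -> 'I_n),
    simple G -> injective f -> F n G -> F m (induced G f).

(* G in H(s,t): vertex set partitioned into s independent sets (classes < s)
   and t cliques (classes >= s); parts may be empty *)
Definition inH (s t : nat) n (G : graph n) : Prop :=
  exists f : 'I_n -> 'I_(s + t),
    forall x y, x != y -> f x = f y -> G (x, y) = (s <= f x).

Definition containsH (F : graph_family) (s t : nat) : Prop :=
  forall n (G : graph n), simple G -> inH s t G -> F n G.

(* chi_c(F) <= 1 : no l >= 2 and s <= l with H(s, l - s) ⊆ F *)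
Definition thin (F : graph_family) : Prop :=
  forall s t, 2 <= s + t -> ~ containsH F s t.

Definition substar n (G : graph n) : Prop :=
  exists v : 'I_n, forall x y, G (x, y) -> x = v \/ y = v.

Definition complement n (G : graph n) : graph n :=
  [ffun e : 'I_n * 'I_n => (e.1 != e.2) && ~~ G e].

Definition antisubstar n (G : graph n) : Prop := substar (complement G).

Definition meager (F : graph_family) : Prop :=
  thin F /\
  (exists n (G : graph n), simple G /\ substar G /\ ~~ F n G) /\
  (exists n (G : graph n), simple G /\ antisubstar G /\ ~~ F n G).

(* a partition of 'I_n into l labelled parts, encoded by a part-assignment *)
Definition part n l (p : {ffun 'I_n -> 'I_l}) (i : 'I_l) : {set 'I_n} :=
  [set x | p x == i].

Definition Fl_partition (F : graph_family) n l (G : graph n) (p : {ffun 'I_n -> 'I_l}) : bool :=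
  [forall i, F _ (sub G (part p i))].

(* p is the unique (F,l)-partition of G (uniqueness as a set partition,
   i.e. up to relabelling of the parts) *)
Definition unique_Fl_partition (F : graph_family) n l (G : graph n) (p : {ffun 'I_n -> 'I_l}) : bool :=
  Fl_partition F G p &&
  [forall q : {ffun 'I_n -> 'I_l}, Fl_partition F G q ==>
     [forall x, forall y, (p x == p y) == (q x == q y)]].

Definition balanced (eps : R) n l (p : {ffun 'I_n -> 'I_l}) : Prop :=
  forall i : 'I_l,
    Rle (Rabs (Rminus (INR #|part p i|) (Rdiv (INR n) (INR l))))
        (Rpower (INR n) (Rminus R1 eps)).

Definition extension n l (p : {ffun 'I_n -> 'I_l})
    (Gs : forall i : 'I_l, graph #|part p i|) (G : graph n) : bool :=
  simple G && [forall i, sub G (part p i) == Gs i].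

(* Main.v *)
Require Import Defs.
From Stdlib Require Import Reals Lra.
From mathcomp Require Import all_boot zify.
Set Implicit Arguments. Unset Strict Implicit. Unset Printing Implicit Defensive.

Lemma simple_irr n (G : graph n) x : simple G -> G (x, x) = false.
Proof. by case/andP=> /forallP /(_ x) /negbTE. Qed.

Lemma simple_sym n (G : graph n) x y : simple G -> G (x, y) = G (y, x).
Proof. by case/andP=> _ /forallP /(_ x) /forallP /(_ y) /eqP. Qed.

Lemma simple_sub n (G : graph n) (A : {set 'I_n}) : simple G -> simple (sub G A).
Proof.
move=> sG; apply/andP; split.
  by apply/forallP=> x; rewrite /sub /induced ffunE /= simple_irr.
by apply/forallP=> x; apply/forallP=> y; rewrite /sub /induced !ffunE /= (simple_sym _ _ sG).
Qed.

Lemma induced_comp n m k (G : graph n) (f : 'I_m -> 'I_n) (g : 'I_k -> 'I_m) :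
  induced (induced G f) g = induced G (f \o g).
Proof. by apply/ffunP=> [[x y]]; rewrite !ffunE. Qed.

Lemma notT_sub (T : graph_family) (hT : hereditary T) n (G : graph n) (Y : {set 'I_n})
   m (S : graph m) (g : 'I_m -> 'I_n) :
  simple G -> injective g -> (forall x, g x \in Y) -> induced G g = S -> ~~ T m S ->
  ~~ T _ (sub G Y).
Proof.
move=> sG ig gY eS nTS; apply/negP=> TY.
pose f := fun x => enum_rank_in (gY x) (g x).
have ef : forall x, enum_val (f x) = g x by move=> x; rewrite /f enum_rankK_in.
have fi : injective f by move=> x y exy; apply: ig; rewrite -!ef exy.
have := hT _ _ _ f (simple_sub Y sG) fi TY.
have -> : induced (sub G Y) f = S.
  by rewrite /sub induced_comp -eS; apply/ffunP=> [[x y]]; rewrite !ffunE /= !ef.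
by rewrite (negbTE nTS).
Qed.

Lemma nth_index_inj (T U : eqType) (x0 : U) (s : seq T) (t : seq U) a b :
  uniq t -> size s <= size t -> a \in s -> b \in s ->
  nth x0 t (index a s) = nth x0 t (index b s) -> a = b.
Proof.
move=> ut st as_ bs e.
move/eqP: e; rewrite nth_uniq //; last 2 first.
- by apply: leq_trans st; rewrite index_mem.
- by apply: leq_trans st; rewrite index_mem.
move/eqP=> ei; case: s as_ bs ei {st} => [//|y s] as_ bs ei.
by rewrite -(nth_index y as_) ei nth_index.
Qed.

Lemma embed_gen n (G : graph n) (Y H : {set 'I_n}) w m (S : graph m) (c : 'I_m) (b : bool) :
  simple G -> simple S ->
  (forall x y, x != c -> y != c -> x != y -> S (x, y) = b) ->
  (forall x y, x \in H -> y \in H -> x != y -> G (x, y) = b) ->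
  H \subset Y -> w \in Y -> w \notin H ->
  m <= #|[set x in H | G (w, x)]| -> m <= #|[set x in H | ~~ G (w, x)]| ->
  exists g : 'I_m -> 'I_n, [/\ injective g, (forall x, g x \in Y) & induced G g = S].
Proof.
move=> sG sS Sb Hb HY wY wH mN mM.
set NH := [set x in H | G (w, x)]; set MH := [set x in H | ~~ G (w, x)].
set NS := [set x | (x != c) && S (c, x)]; set MS := [set x | (x != c) && ~~ S (c, x)].
pose g x := if x == c then w else if S (c, x) then nth w (enum NH) (index x (enum NS))
            else nth w (enum MH) (index x (enum MS)).
have sNS : size (enum NS) <= size (enum NH).
  by rewrite -!cardE; apply: leq_trans mN; by rewrite -[X in _ <= X](card_ord m) max_card.
have sMS : size (enum MS) <= size (enum MH).
  by rewrite -!cardE; apply: leq_trans mM; by rewrite -[X in _ <= X](card_ord m) max_card.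
have gN : forall x, x != c -> S (c, x) -> g x \in NH.
  move=> x xc Sx; rewrite /g (negbTE xc) Sx.
  have xin : x \in enum NS by rewrite mem_enum inE xc Sx.
  rewrite -mem_enum mem_nth //; apply: leq_trans sNS; by rewrite index_mem.
have gM : forall x, x != c -> ~~ S (c, x) -> g x \in MH.
  move=> x xc Sx; rewrite /g (negbTE xc) (negbTE Sx).
  have xin : x \in enum MS by rewrite mem_enum inE xc Sx.
  rewrite -mem_enum mem_nth //; apply: leq_trans sMS; by rewrite index_mem.
have gH : forall x, x != c -> g x \in H.
  move=> x xc; case Sx: (S (c, x)).
    by have := gN x xc Sx; rewrite inE => /andP[].
  by have := gM x xc (negbT Sx); rewrite inE => /andP[].
have gc : g c = w by rewrite /g eqxx.
have ig : injective g.
  move=> x y; case: (eqVneq x c) => [->|xc]; case: (eqVneq y c) => [->|yc] //.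
  - by rewrite gc => e; move: (gH y yc); rewrite -e (negbTE wH).
  - by rewrite gc => e; move: (gH x xc); rewrite e (negbTE wH).
  case Sx: (S (c, x)); case Sy: (S (c, y)).
  - rewrite /g (negbTE xc) (negbTE yc) Sx Sy /= => e; by apply: (nth_index_inj _ _ _ _ e); rewrite ?enum_uniq ?mem_enum ?inE ?xc ?yc ?Sx ?Sy.
  - move=> e; have := gN x xc Sx; have := gM y yc (negbT Sy).
    by rewrite e !inE => /andP[_ /negbTE ->] /andP[].
  - move=> e; have := gM x xc (negbT Sx); have := gN y yc Sy.
    by rewrite e !inE => /andP[_ ->] /andP[].
  - rewrite /g (negbTE xc) (negbTE yc) Sx Sy /= => e; by apply: (nth_index_inj _ _ _ _ e); rewrite ?enum_uniq ?mem_enum ?inE ?xc ?yc ?Sx ?Sy.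
exists g; split => //.
  move=> x; case: (eqVneq x c) => [->|xc]; first by rewrite gc.
  by apply: (subsetP HY); apply: gH.
have key : forall y, y != c -> G (w, g y) = S (c, y).
  move=> y yc; case Sy: (S (c, y)).
    by have := gN y yc Sy; rewrite inE => /andP[].
  by have := gM y yc (negbT Sy); rewrite inE => /andP[_ /negbTE].
apply/ffunP=> [[x y]]; rewrite ffunE /=.
case: (eqVneq x c) => [->|xc]; case: (eqVneq y c) => [->|yc].
- by rewrite gc !simple_irr.
- by rewrite gc key.
- by rewrite gc (simple_sym _ _ sG) key // (simple_sym _ _ sS).
case: (eqVneq x y) => [->|xy]; first by rewrite !simple_irr.
rewrite Sb // Hb ?gH //.
by apply/negP=> /eqP /ig /eqP; rewrite (negbTE xy).
Qed.

Definition hom n (G : graph n) (H : {set 'I_n}) (b : bool) : bool :=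
  [forall x, forall y, ((x \in H) && (y \in H) && (x != y)) ==> (G (x, y) == b)].

Lemma homP n (G : graph n) H b x y : hom G H b -> x \in H -> y \in H -> x != y -> G (x, y) = b.
Proof. by move=> /forallP /(_ x) /forallP /(_ y) /implyP hH xH yH xy; apply/eqP/hH; rewrite xH yH. Qed.

Lemma hom_add n (G : graph n) H b v : simple G -> hom G H b -> v \notin H ->
  (forall y, y \in H -> G (v, y) = b) -> hom G (v |: H) b.
Proof.
move=> sG hH vH vy; apply/forallP=> x; apply/forallP=> y; apply/implyP.
rewrite !inE => /andP[/andP[xH yH]].
case/orP: xH => [/eqP ->|xH]; case/orP: yH => [/eqP ->|yH].
- by rewrite eqxx.
- by rewrite vy.
- by rewrite simple_sym // vy.
- by move=> xy; rewrite (homP hH).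
Qed.

Lemma hom0 n (G : graph n) b : hom G set0 b.
Proof. by apply/forallP=> x; apply/forallP=> y; rewrite inE. Qed.

Lemma ramsey n (G : graph n) : simple G -> forall a b (A : {set 'I_n}), 2 ^ (a + b) <= #|A| ->
  exists H : {set 'I_n}, H \subset A /\ ((#|H| = a /\ hom G H true) \/ (#|H| = b /\ hom G H false)).
Proof.
move=> sG; elim=> [|a IHa].
  by move=> b A _; exists set0; split; [exact: sub0set | left; rewrite cards0; split => //; exact: hom0].
elim=> [|b IHb].
  by move=> A _; exists set0; split; [exact: sub0set | right; rewrite cards0; split => //; exact: hom0].
move=> A hA.
have [v vA] : exists v, v \in A.
  apply/set0Pn; apply/negP=> /eqP A0; move: hA; rewrite A0 cards0.
  by rewrite leqNgt expn_gt0.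
set N := (A :\ v) :&: [set y | G (v, y)]; set M := (A :\ v) :\: [set y | G (v, y)].
have cA : #|A| = #|N| + #|M| + 1.
  by rewrite (cardsD1 v A) vA /N /M cardsID addn1.
have vN : v \notin N by rewrite !inE eqxx.
have vM : v \notin M by rewrite !inE eqxx /= ?andbF.
have NA : N \subset A by apply/subsetP=> y; rewrite !inE => /andP[/andP[]].
have MA : M \subset A by apply/subsetP=> y; rewrite !inE => /andP[_ /andP[]].
have [bigN|smallN] := leqP (2 ^ (a + b.+1)) #|N|.
  have [H [HN [[cH hH]|[cH hH]]]] := IHa b.+1 N bigN.
    exists (v |: H); split.
      by rewrite subUset sub1set vA (subset_trans HN NA).
    left; split.
      have vH : v \notin H by apply/negP => vH; move: (subsetP HN v vH); rewrite (negbTE vN).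
      by rewrite cardsU1 vH cH.
    apply: hom_add => //.
      by apply/negP => vH; move: (subsetP HN v vH); rewrite (negbTE vN).
    by move=> y /(subsetP HN); rewrite !inE => /andP[_].
  by exists H; split; [exact: subset_trans HN NA | right].
have bigM : 2 ^ (a.+1 + b) <= #|M|.
  rewrite leqNgt; apply/negP=> smallM; move: hA; rewrite cA.
  have e1 : 2 ^ (a.+1 + b.+1) = 2 * 2 ^ (a + b.+1) by rewrite addSn expnS.
  have e2 : 2 ^ (a.+1 + b) = 2 ^ (a + b.+1) by rewrite addSn addnS.
  rewrite e1; rewrite e2 in smallM; lia.
have [H [HM [[cH hH]|[cH hH]]]] := IHb M bigM.
  by exists H; split; [exact: subset_trans HM MA | left].
exists (v |: H); split.
  by rewrite subUset sub1set vA (subset_trans HM MA).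
right; split.
  have vH : v \notin H by apply/negP => vH; move: (subsetP HM v vH); rewrite (negbTE vM).
  by rewrite cardsU1 vH cH.
apply: hom_add => //.
  by apply/negP => vH; move: (subsetP HM v vH); rewrite (negbTE vM).
by move=> y /(subsetP HM); rewrite !inE => /andP[/negbTE].
Qed.

Definition homs n (G : graph n) H := hom G H true || hom G H false.

Lemma greedy n (G : graph n) h : simple G -> 0 < h -> forall A : {set 'I_n},
  exists F : {set {set 'I_n}},
    [/\ (forall H, H \in F -> [/\ H \subset A, #|H| = h & homs G H]),
        (forall H1 H2, H1 \in F -> H2 \in F -> H1 != H2 -> [disjoint H1 & H2]) &
        #|A| <= #|F| * h + 2 ^ (h + h)].
Proof.
move=> sG h0 A; have [m] := ubnP #|A|; elim: m A => // m IH A lt.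
have [small|big] := ltnP #|A| (2 ^ (h + h)).
  exists set0; split; [by move=> H; rewrite inE | by move=> ? ?; rewrite inE | ].
  by rewrite cards0 mul0n add0n ltnW.

have [H [HA hH]] := ramsey sG big.
have [cH homH] : #|H| = h /\ homs G H.
  by case: hH => [[c hh]|[c hh]]; split => //; rewrite /homs hh ?orbT.
have ltA : #|A :\: H| < m.
  rewrite cardsDS // cH; have := expn_gt0 2 (h + h); lia.
have [F [FP Fd Fc]] := IH _ ltA.
have HF : H \notin F.
  apply/negP=> /FP [sub _ _].
  have [x xH] : exists x, x \in H.
    by apply/set0Pn; apply/negP=> /eqP H0; move: cH h0; rewrite H0 cards0 => <-.
  by move: (subsetP sub x xH); rewrite inE xH.
exists (H |: F); split.
- move=> H'; rewrite !inE => /orP[/eqP ->|/FP [s c hh]]; first by split.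
  by split => //; apply: subset_trans s (subsetDl _ _).
- have dH : forall H2, H2 \in F -> [disjoint H & H2].
    move=> H2 /FP [s _ _]; rewrite disjoint_sym disjoints_subset.
    by apply: subset_trans s _; apply/subsetP=> x; rewrite !inE => /andP[].
  move=> H1 H2; rewrite !inE => /orP[/eqP ->|H1F] /orP[/eqP ->|H2F].
  + by rewrite eqxx.
  + by move=> _; apply: dH.
  + by move=> _; rewrite disjoint_sym; apply: dH.
  + by apply: Fd.
- rewrite cardsU1 HF add1n mulSn.
  have : #|A| = #|A :\: H| + h by rewrite cardsDS // cH subnK // -cH subset_leq_card.
  lia.
Qed.

Definition toggle n (G : graph n) (g : {set 'I_n * 'I_n}) : graph n :=
  [ffun e => G e (+) ((e \in g) || ((e.2, e.1) \in g))].
Definition restr n (D : {set 'I_n * 'I_n}) (G : graph n) : {set 'I_n * 'I_n} :=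
  [set e in D | G e].

Lemma toggleK n (g : {set 'I_n * 'I_n}) :
  cancel (fun G : graph n => toggle G g) (fun G : graph n => toggle G g).
Proof. by move=> G; apply/ffunP=> e; rewrite !ffunE addbK. Qed.

Lemma card_set_sum (T : finType) (P : {set T}) (Q : pred T) :
  #|[set x in P | Q x]| = \sum_(x in P) (Q x : nat).
Proof.
rewrite -sum1_card big_mkcond /= [RHS]big_mkcond /=.
by apply: eq_bigr => x _; rewrite !inE; case: (x \in P); case: (Q x).
Qed.

Lemma toggle_count n (E' : {set graph n}) (D : {set 'I_n * 'I_n})
    (B : {set {set 'I_n * 'I_n}}) :
  (forall e, e \in D -> (e.2, e.1) \notin D) ->
  (forall G (g : {set 'I_n * 'I_n}), G \in E' -> g \subset D -> toggle G g \in E') ->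
  B \subset powerset D ->
  #|[set G in E' | restr D G \in B]| * 2 ^ #|D| = #|E'| * #|B|.
Proof.
move=> hD hE hB.
set EB := [set G in E' | restr D G \in B].
pose sd (X S : {set 'I_n * 'I_n}) := [set e in D | (e \in X) (+) (e \in S)].
have sdK : forall X (S : {set 'I_n * 'I_n}), S \subset D -> sd X (sd X S) = S.
  move=> X S SD; apply/setP=> e; rewrite !inE.
  case eD: (e \in D) => /=; first by rewrite addKb.
  by apply/esym/negbTE/negP=> /(subsetP SD); rewrite eD.
have sdD : forall X (S : {set 'I_n * 'I_n}), sd X S \subset D by move=> X S; apply/subsetP=> e; rewrite inE => /andP[].
have rt : forall G (g : {set 'I_n * 'I_n}), g \subset D -> restr D (toggle G g) = sd (restr D G) g.
  move=> G g gD; apply/setP=> e; rewrite !inE ffunE.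
  case eD: (e \in D) => //=.
  have -> : ((e.2, e.1) \in g) = false.
    by apply/negbTE/negP=> /(subsetP gD); apply/negP; rewrite hD.
  by rewrite orbF.
have BD : forall S : {set 'I_n * 'I_n}, S \in B -> S \subset D by move=> S /(subsetP hB); rewrite powersetE.
have L1 : forall G, G \in E' -> #|[set g in powerset D | toggle G g \in EB]| = #|B|.
  move=> G GE.
  have -> : [set g in powerset D | toggle G g \in EB] = (sd (restr D G)) @: B.
    apply/setP=> g; rewrite !inE; apply/andP/imsetP.
      move=> -[gD /andP[_ tB]].
      exists (sd (restr D G) g); first by rewrite -rt.
      by rewrite sdK.
    move=> [S SB ->]; rewrite sdD; split => //.
    by rewrite hE //= rt // sdK // BD.
  rewrite card_in_imset //.
  by move=> S1 S2 S1B S2B e; rewrite -(sdK (restr D G) S1) ?BD // e sdK ?BD.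
have L2 : forall g : {set 'I_n * 'I_n}, g \in powerset D -> #|[set G in E' | toggle G g \in EB]| = #|EB|.
  move=> g gD; rewrite powersetE in gD.
  have -> : [set G in E' | toggle G g \in EB] = (fun G : graph n => toggle G g) @: EB.
    apply/setP=> G; rewrite !inE; apply/andP/imsetP.
      move=> [GE tB]; exists (toggle G g); [by rewrite inE | by rewrite toggleK].
    move=> [G' G'B ->]; rewrite /= toggleK; split => //.
      by apply: hE => //; move: G'B; rewrite inE => /andP[].
    by rewrite inE in G'B.
  rewrite card_in_imset // => G1 G2 _ _; exact: (can_inj (toggleK g)).
have dc : \sum_(G in E') #|[set g in powerset D | toggle G g \in EB]|
        = \sum_(g in powerset D) #|[set G in E' | toggle G g \in EB]|.
  under eq_bigr => G _ do rewrite card_set_sum.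
  rewrite exchange_big /=.
  by apply: eq_bigr => g _; rewrite card_set_sum.
rewrite (eq_bigr (fun _ => #|B|)) in dc; last by move=> G GE; rewrite L1.
rewrite [in RHS](eq_bigr (fun _ => #|EB|)) in dc; last by move=> g gD; rewrite L2.
rewrite !sum_nat_const card_powerset in dc.
by rewrite mulnC -dc.
Qed.

Lemma blocks n (E : {set graph n}) (X : eqType) (Ds : X -> {set 'I_n * 'I_n})
    (Bs : X -> {set {set 'I_n * 'I_n}}) c (s : seq X) :
  uniq s ->
  (forall x, x \in s -> Bs x \subset powerset (Ds x)) ->
  (forall x, x \in s -> #|Bs x| * 2 ^ c <= 2 ^ #|Ds x|) ->
  (forall x y e, x \in s -> y \in s -> e \in Ds x -> (e.2, e.1) \notin Ds y) ->
  (forall x y, x \in s -> y \in s -> x != y -> [disjoint Ds x & Ds y]) ->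
  (forall x G (g : {set 'I_n * 'I_n}), x \in s -> G \in E -> g \subset Ds x -> toggle G g \in E) ->
  #|[set G in E | all (fun x => restr (Ds x) G \in Bs x) s]| * 2 ^ (c * size s) <= #|E|.
Proof.
elim: s => [|x s IH].
  move=> *; rewrite muln0 expn0 muln1; apply: subset_leq_card.
  by apply/subsetP=> G; rewrite inE => /andP[].
rewrite cons_uniq => /andP[xs us] hB hc hr hd hE.
have mb : forall y, y \in s -> y \in x :: s by move=> y ys; rewrite inE ys orbT.
have IH' := IH us (fun y ys => hB y (mb _ ys)) (fun y ys => hc y (mb _ ys))
  (fun y z e ys zs => hr y z e (mb _ ys) (mb _ zs))
  (fun y z ys zs => hd y z (mb _ ys) (mb _ zs))
  (fun y G g ys => hE y G g (mb _ ys)).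
set Es := [set G in E | all (fun x => restr (Ds x) G \in Bs x) s] in IH'.
have xin : x \in x :: s by rewrite inE eqxx.
have eq1 : [set G in E | all (fun x => restr (Ds x) G \in Bs x) (x :: s)]
         = [set G in Es | restr (Ds x) G \in Bs x].
  by apply/setP=> G; rewrite !inE /=; case: (G \in E); case: (restr (Ds x) G \in Bs x); rewrite /= ?andbT ?andbF.
have tc := @toggle_count n Es (Ds x) (Bs x).
rewrite -eq1 in tc.
have := tc (fun e eD => hr x x e xin xin eD).
have cl : forall G (g : {set 'I_n * 'I_n}), G \in Es -> g \subset Ds x -> toggle G g \in Es.
  move=> G g; rewrite !inE => /andP[GE /allP al] gD.
  rewrite (hE x) //=; apply/allP=> y ys.
  have -> : restr (Ds y) (toggle G g) = restr (Ds y) G.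
    apply/setP=> e; rewrite !inE ffunE.
    case eD: (e \in Ds y) => //=.
    have yx : x != y by apply/negP=> /eqP xy; move: xs; rewrite xy ys.
    have dxy := hd x y xin (mb _ ys) yx.
    have -> : (e \in g) = false.
      apply/negbTE/negP=> /(subsetP gD) eDx.
      by move: dxy; rewrite disjoint_sym => /disjointFr /(_ eD); rewrite eDx.
    have -> : ((e.2, e.1) \in g) = false.
      apply/negbTE/negP=> /(subsetP gD); apply/negP.
      exact: (hr y x e (mb _ ys) xin eD).
    by rewrite addbF.
  exact: al.
move=> /(_ cl (hB x xin)) tce.
set Ex := [set G in E | _] in tce *.
have k1 : #|Ex| * 2 ^ c <= #|Es|.
  have h2 : 0 < 2 ^ #|Ds x| by rewrite expn_gt0.
  rewrite -(leq_pmul2r h2) mulnAC tce -mulnA.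
  by rewrite leq_mul2l hc // orbT.
rewrite /= mulnS expnD mulnA.
apply: leq_trans IH'; by rewrite leq_mul2r k1 orbT.
Qed.

Lemma ffact_le_exp n m : n ^_ m <= n ^ m.
Proof.
elim: m n => [|m IH] n; first by rewrite ffactn0 expn0.
rewrite ffactnS expnS leq_mul2l; case: n => [|n] //=.
by apply: leq_trans (IH n) _; case: m {IH} => [|m]; rewrite ?expn0 ?leq_exp2r ?leqnSn.
Qed.

Lemma bin_le_exp n m : 'C(n, m) <= n ^ m.
Proof.
apply: leq_trans (ffact_le_exp n m); rewrite -bin_ffact.
by rewrite leq_pmulr // fact_gt0.
Qed.

Definition badset (T : finType) k (D : {set T}) : {set {set T}} :=
  [set S in powerset D | (#|S| < k) || (#|D :\: S| < k)].

Lemma small_card (T : finType) (D : {set T}) k :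
  #|[set S : {set T} | S \subset D & #|S| < k]| <= \sum_(j < k) 'C(#|D|, j).
Proof.
elim: k => [|k IH].
  rewrite big_ord0 leqn0 cards_eq0; apply/eqP/setP=> S; by rewrite !inE ltn0 andbF.
rewrite big_ord_recr /=.
have -> : [set S : {set T} | S \subset D & #|S| < k.+1]
        = [set S : {set T} | S \subset D & #|S| < k] :|: [set S : {set T} | S \subset D & #|S| == k].
  by apply/setP=> S; rewrite !inE ltnS leq_eqVlt; case: (S \subset D); rewrite //= orbC.
apply: leq_trans (leq_card_setU _ _) _.
by rewrite cards_draws leq_add2r.
Qed.

Lemma badset_card (T : finType) k (D : {set T}) : 0 < #|D| ->
  #|badset k D| <= 2 * (k * #|D| ^ k).
Proof.
move=> pos; set sm := [set S : {set T} | S \subset D & #|S| < k].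
have h1 : badset k D \subset sm :|: [set D :\: S | S in sm].
  apply/subsetP=> S; rewrite !inE => /andP[SD /orP[lt|lt]].
    by rewrite SD lt.
  apply/orP; right; apply/imsetP; exists (D :\: S).
    by rewrite inE subsetDl lt.
  by apply/setP=> x; rewrite !inE; case xS: (x \in S); case xD: (x \in D) => //=;
     move: (subsetP SD x xS); rewrite xD.
have h2 : #|sm| <= k * #|D| ^ k.
  apply: leq_trans (small_card D k) _.
  apply: leq_trans (_ : \sum_(j < k) #|D| ^ k <= _).
    apply: leq_sum => j _; apply: leq_trans (bin_le_exp _ _) _.
    by apply: leq_pexp2l => //; apply: ltnW.
  by rewrite sum_nat_const card_ord.
apply: leq_trans (subset_leq_card h1) _.
apply: leq_trans (leq_card_setU _ _) _.
rewrite mul2n -addnn leq_add //.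
by apply: leq_trans (leq_imset_card _ _) h2.
Qed.

Lemma lin_exp A : exists m0, forall m, m0 <= m -> A * m.+1 <= 2 ^ m.
Proof.
exists ((A + 2) * (A + 2)) => m hm.
have e : 2 ^ m = 2 ^ (A + 1) * 2 ^ (m - (A + 1)) by rewrite -expnD subnKC //; lia.
have h1 : A + 1 < 2 ^ (A + 1) by apply: ltn_expl.
have h2 : m - (A + 1) < 2 ^ (m - (A + 1)) by apply: ltn_expl.
rewrite e; apply: leq_trans (_ : (A + 2) * (m - A) <= _).
  have : m - A = m - (A + 1) + 1 by lia.
  move=> ->; nia.
by apply: leq_mul; lia.
Qed.

Lemma poly_exp a k : exists h, 0 < h /\ a * h ^ k <= 2 ^ h.
Proof.
have [m0 hm] := lin_exp (a + k).
exists (2 ^ (m0 + 1)); split; first by rewrite expn_gt0.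
have := hm (m0 + 1) (leq_addr _ _).
set m := m0 + 1 => hle.
rewrite -expnM.
have ha : a <= 2 ^ a by apply: ltnW; apply: ltn_expl.
apply: leq_trans (_ : 2 ^ a * 2 ^ (m * k) <= _); first by rewrite leq_mul2r ha orbT.
rewrite -expnD leq_pexp2l //; nia.
Qed.

Lemma union_bound (T U : finType) (X : {set T}) (Y : U -> {set T}) (I : {set U}) a b :
  (forall x, x \in X -> exists u, u \in I /\ x \in Y u) ->
  (forall u, u \in I -> #|Y u| * a <= b) -> #|X| * a <= #|I| * b.
Proof.
move=> hX hY.
have h1 : #|X| <= \sum_(u in I) #|Y u|.
  rewrite -sum1_card.
  apply: leq_trans (_ : \sum_(x in X) \sum_(u in I) (x \in Y u : nat) <= _).
    apply: leq_sum => x xX; have [u [uI xY]] := hX x xX.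
    by rewrite (bigD1 u) //= xY.
  rewrite exchange_big /=; apply: leq_sum => u _.
  by rewrite -card_set_sum; apply: subset_leq_card; apply/subsetP=> x; rewrite !inE => /andP[].
apply: leq_trans (_ : (\sum_(u in I) #|Y u|) * a <= _); first by rewrite leq_mul2r h1 orbT.
rewrite big_distrl /= -sum_nat_const; apply: leq_sum => u uI; exact: hY.
Qed.

Lemma partition_sum n l (q : 'I_n -> 'I_l) (A : {set 'I_n}) :
  \sum_(j < l) #|[set x in A | q x == j]| = #|A|.
Proof.
under eq_bigr => j _ do rewrite card_set_sum.
rewrite exchange_big /= -sum1_card; apply: eq_bigr => x _.
rewrite (bigD1 (q x)) //= eqxx big1 // => j /negbTE; by rewrite eq_sym => ->.
Qed.

Definition Dw n (w : 'I_n) (H : {set 'I_n}) : {set 'I_n * 'I_n} := [set (w, x) | x in H].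

Definition good n k (G : graph n) (w : 'I_n) (H : {set 'I_n}) : bool :=
  (k <= #|[set x in H | G (w, x)]|) && (k <= #|[set x in H | ~~ G (w, x)]|).

Lemma card_Dw n (w : 'I_n) H : #|Dw w H| = #|H|.
Proof. by rewrite card_imset // => x y []. Qed.

Lemma goodE n k (G : graph n) w H :
  good k G w H = (restr (Dw w H) G \notin badset k (Dw w H)).
Proof.
have inj : injective (fun x : 'I_n => (w, x)) by move=> x y [].
have gen : forall P : pred ('I_n * 'I_n),
    [set e in Dw w H | P e] = [set (w, x) | x in [set x in H | P (w, x)]].
  move=> P; apply/setP=> [[a b]]; rewrite !inE; apply/andP/imsetP.
    by move=> [/imsetP [x xH [-> ->]] Ge]; exists x => //; rewrite inE xH.
  by move=> [x]; rewrite inE => /andP[xH Gx] [-> ->]; split => //; apply/imsetP; exists x.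
have e1 : restr (Dw w H) G = [set (w, x) | x in [set x in H | G (w, x)]] by rewrite /restr gen.
have e2 : Dw w H :\: restr (Dw w H) G = [set (w, x) | x in [set x in H | ~~ G (w, x)]].
  rewrite -(gen (fun e => ~~ G e)); apply/setP=> e; rewrite !inE.
  by case: (e \in Dw w H); case: (G e).
have rD : restr (Dw w H) G \in powerset (Dw w H) by rewrite powersetE; apply/subsetP=> e; rewrite inE => /andP[].
rewrite /good /badset inE rD /= e2 e1 !card_imset //.
by rewrite negb_or -!leqNgt.
Qed.

Section Ext.
Variables (n l : nat) (p : {ffun 'I_n -> 'I_l}) (Gs : forall i : 'I_l, graph #|part p i|).

Definition Ex := [set G : graph n | @extension n l p Gs G].

Lemma sub_val (G : graph n) (Y : {set 'I_n}) x y (xY : x \in Y) (yY : y \in Y) :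
  sub G Y (enum_rank_in xY x, enum_rank_in xY y) = G (x, y).
Proof. by rewrite /sub /induced ffunE /= !enum_rankK_in. Qed.

Lemma ext_agree G G0 x y : G \in Ex -> G0 \in Ex -> p x = p y -> G (x, y) = G0 (x, y).
Proof.
rewrite !inE => /andP[_ /forallP /(_ (p x)) /eqP e] /andP[_ /forallP /(_ (p x)) /eqP e0] pxy.
have xP : x \in part p (p x) by rewrite inE.
have yP : y \in part p (p x) by rewrite inE pxy.
by rewrite -(sub_val G xP yP) -(sub_val G0 xP yP) e e0.
Qed.

Lemma toggle_Ex G (g : {set 'I_n * 'I_n}) :
  (forall e, e \in g -> p e.1 != p e.2) -> G \in Ex -> toggle G g \in Ex.
Proof.
move=> cg; rewrite !inE => /andP[/andP[irr sym] /forallP hs].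
have nc : forall x y, p x = p y -> ((x, y) \in g) = false.
  by move=> x y pxy; apply/negbTE/negP=> /cg /=; rewrite pxy eqxx.
apply/andP; split; first (apply/andP; split).
- apply/forallP=> x; rewrite ffunE /= nc //= addbF.
  by move/forallP: irr => /(_ x).
- apply/forallP=> x; apply/forallP=> y; rewrite !ffunE /=.
  by move/forallP: sym => /(_ x) /forallP /(_ y) /eqP ->; rewrite orbC.
apply/forallP=> i; rewrite -(eqP (hs i)); apply/eqP/ffunP=> [[a b]].
rewrite /sub /induced !ffunE /=.
have ea := enum_valP a; have eb := enum_valP b.
rewrite inE in ea; rewrite inE in eb.
by rewrite !nc ?addbF // (eqP ea) (eqP eb).
Qed.

End Ext.

Section Det.
Variables (T : graph_family) (n l : nat) (p : {ffun 'I_n -> 'I_l}) (G : graph n)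
  (k h d L : nat) (fam : 'I_l -> {set {set 'I_n}}).
Hypothesis sG : simple G.
Hypothesis hS : forall (Y H : {set 'I_n}) w, H \subset Y -> w \in Y -> w \notin H -> homs G H ->
  good k G w H -> ~~ @T _ (sub G Y).
Hypothesis PP : forall i' (H W : {set 'I_n}), #|H| = h -> [disjoint H & part p i'] -> W \subset part p i' ->
  n < d * #|W| -> exists2 w, w \in W & good k G w H.
Hypothesis PP2 : forall i v, p v != i -> L < #|[set H in fam i | good k G v H]|.
Hypothesis famP : forall i (H : {set 'I_n}), H \in fam i -> H \subset part p i /\ homs G H.
Hypothesis famD : forall i (H1 H2 : {set 'I_n}), H1 \in fam i -> H2 \in fam i -> H1 != H2 -> [disjoint H1 & H2].
Hypothesis sz : forall i, n <= 2 * l * #|part p i|.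
Hypothesis hd : d = 4 * l * l.
Hypothesis n0 : 0 < n.
Hypothesis nR : d * 2 ^ (h + h) <= n.
Hypothesis hL : l * 2 ^ (h + h) <= L.

Lemma det (q : {ffun 'I_n -> 'I_l}) : Fl_partition T G q ->
  forall x y, (p x == p y) == (q x == q y).
Proof.
move=> /forallP TY.
set R := 2 ^ (h + h).
pose Z j i := part q j :&: part p i.
have stepA : forall j i i', i != i' -> R <= #|Z j i| -> n < d * #|Z j i'| -> False.
  move=> j i i' ii' bigi bigi'.
  have [H [HZ hH]] := ramsey sG bigi.
  have [cH homH] : #|H| = h /\ homs G H.
    by case: hH => [[c hh]|[c hh]]; split => //; rewrite /homs hh ?orbT.
  have HX : H \subset part p i by apply: subset_trans HZ (subsetIr _ _).
  have HY : H \subset part q j by apply: subset_trans HZ (subsetIl _ _).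
  have dH : [disjoint H & part p i'].
    rewrite disjoint_sym disjoints_subset; apply/subsetP=> x; rewrite !inE => /eqP px.
    apply/negP=> /(subsetP HX); rewrite inE px => /eqP ei; by rewrite ei eqxx in ii'.
  have [w wZ gw] := PP cH dH (subsetIr _ _) bigi'.
  move: wZ; rewrite inE => /andP[wY wX].
  have wH : w \notin H by rewrite (disjointFl dH wX).
  by move: (TY j); rewrite (negbTE (hS HY wY wH homH gw)).
have stepB : forall i, exists j, n < d * #|Z j i|.
  move=> i; case: (boolP [exists j, n < d * #|Z j i|]) => [/existsP //|]; rewrite negb_exists => /forallP small; exfalso.
  have : d * #|part p i| <= l * n.
    rewrite -(partition_sum q (part p i)) big_distrr /=.
    rewrite -[l in l * n]card_ord -sum_nat_const; apply: leq_sum => j _.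
    have -> : [set x in part p i | q x == j] = Z j i by apply/setP=> x; rewrite !inE andbC.
    by rewrite leqNgt small.
  have := sz i; rewrite hd; nia.
have [sigma hsig] := fin_all_exists stepB.
have sig_inj : injective sigma.
  move=> i i' e; apply/eqP/negPn/negP=> ii'.
  apply: (stepA (sigma i) i i' ii') (_ : _) ; last by rewrite e.
  have := hsig i; nia.
have sig_onto : forall j, exists i, sigma i = j.
  move=> j; have := inj_card_onto sig_inj (leqnn _) j.
  by move/codomP=> [i ->]; exists i.
have stepD : forall i j, j != sigma i -> #|Z j i| < R.
  move=> i j js; rewrite ltnNge; apply/negP=> big.
  have [i0 e0] := sig_onto j.
  have ii0 : i != i0 by apply/negP=> /eqP ii; rewrite -e0 -ii eqxx in js.
  by apply: (stepA j i i0 ii0 big); rewrite -e0; apply: hsig.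
have stepE : forall i, #|part p i :\: part q (sigma i)| <= L.
  move=> i.
  have e1 := partition_sum q (part p i).
  rewrite (bigD1 (sigma i)) //= in e1.
  have e2 := cardsID (part q (sigma i)) (part p i).
  have e3 : #|[set x in part p i | q x == sigma i]| = #|part p i :&: part q (sigma i)|.
    by apply: eq_card => x; rewrite !inE.
  have e4 : \sum_(j < l | j != sigma i) #|[set x in part p i | q x == j]| <= l * R.
    apply: leq_trans (_ : \sum_(j < l | j != sigma i) R <= _).
      apply: leq_sum => j js; apply: ltnW.
      have -> : [set x in part p i | q x == j] = Z j i by apply/setP=> x; rewrite !inE andbC.
      exact: stepD.
    rewrite sum_nat_const; apply: leq_mul => //.
    by rewrite -[X in _ <= X]card_ord max_card.
  have hL' : l * R <= L := hL. move: e1 e2 e3 e4 hL'. set a := #|_ :\: _|. set b := \sum_(_ < l | _) _. set u := #|[set x in part p i | q x == sigma i]|. set v := #|part p i :&: _|. set w := #|part p i|. lia.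
have stepF : forall x, q x = sigma (p x).
  move=> x; have [i0 e0] := sig_onto (q x).
  case: (eqVneq (p x) i0) => [-> //|pxi]; exfalso.
  have hP2 := PP2 pxi.
  set Zs := part p i0 :\: part q (q x).
  have zL : #|Zs| <= L by rewrite /Zs -e0; apply: stepE.
  have [H] : exists H, [&& H \in fam i0, good k G x H & [disjoint H & Zs]].
    case: (boolP [exists H, [&& H \in fam i0, good k G x H & [disjoint H & Zs]]]) => [/existsP //|].
    rewrite negb_exists => /forallP none; exfalso.
    have : #|[set H in fam i0 | good k G x H]| <= #|Zs|.
      pose f H := odflt x [pick y in H :&: Zs].
      have fZ : forall H, H \in [set H in fam i0 | good k G x H] -> f H \in H :&: Zs.
        move=> H; rewrite inE => /andP[Hf gH].
        have := none H; rewrite Hf gH /= => nd.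
        rewrite /f; case: pickP => [y -> //|empty].
        exfalso; move: nd; rewrite disjoint_subset => /negP; apply.
        apply/subsetP=> y yH; rewrite inE; apply/negP=> yZ.
        by have := empty y; rewrite inE yH yZ.
      rewrite -(card_in_imset (f := f)).
        apply: subset_leq_card; apply/subsetP=> y /imsetP [H HS ->].
        by have := fZ H HS; rewrite inE => /andP[].
      move=> H1 H2 H1S H2S ef; apply/eqP/negPn/negP=> ne.
      have := fZ H1 H1S; have := fZ H2 H2S; rewrite ef !inE => /andP[y2 _] /andP[y1 _].
      move: H1S H2S; rewrite !inE => /andP[H1f _] /andP[H2f _].
      by have := famD H1f H2f ne; move/disjointFr => /(_ _ y1); rewrite y2.
    lia.
  move=> /and3P [Hf gH dHZ].
  have [HX homH] := famP Hf.
  have HY : H \subset part q (q x).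
    apply/subsetP=> y yH; apply/negPn/negP=> yY.
    have : y \in Zs by rewrite inE yY (subsetP HX y yH).
    by rewrite (disjointFr dHZ yH).
  have xY : x \in part q (q x) by rewrite inE.
  have xH : x \notin H.
    by apply/negP=> /(subsetP HX); rewrite inE; apply/negP.
  by move: (TY (q x)); rewrite (negbTE (hS HY xY xH homH gH)).
move=> x y; rewrite !stepF.
by rewrite (inj_eq sig_inj) eqxx.
Qed.

End Det.

Section RS.
Local Open Scope R_scope.
Lemma balanced_size l (eps : R) : (0 < l)%N -> Rlt R0 eps ->
  exists N, forall n, (N <= n)%N -> forall p : {ffun 'I_n -> 'I_l}, balanced eps p ->
    forall i, (n <= 2 * l * #|part p i|)%N.
Proof.
move=> hl he.
have lpos : (0 < INR l) by apply: lt_0_INR; apply/ltP.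
have l2 : (0 < 2 * INR l) by lra.
set a := (ln (2 * INR l) / eps).
have [N hN] := INR_unbounded (exp a).
exists N => n hn p hb i.
have nN : (INR N <= INR n) by apply: le_INR; apply/leP.
have npos : (0 < INR n) by have := exp_pos a; lra.
have lnn : (a < ln (INR n)).
  rewrite -{1}(ln_exp a); apply: ln_increasing; first exact: exp_pos.
  lra.
have ea : (ln (2 * INR l) < eps * ln (INR n)).
  have : (a * eps < ln (INR n) * eps) by apply: Rmult_lt_compat_r.
  rewrite /a /Rdiv Rmult_assoc Rinv_l; last by lra.
  lra.
have rp : (Rpower (INR n) (R1 - eps) <= INR n / (2 * INR l)).
  rewrite /Rpower.
  have -> : ((R1 - eps) * ln (INR n) = ln (INR n) + - (eps * ln (INR n))) by ring.
  rewrite exp_plus exp_ln //.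
  have : (exp (- (eps * ln (INR n))) < exp (- ln (2 * INR l))).
    apply: exp_increasing; lra.
  rewrite [exp (- ln _)]exp_Ropp exp_ln // => hlt.
  rewrite /Rdiv; apply: Rmult_le_compat_l; lra.
have hbi := hb i.
have h1 : (INR n / INR l - INR #|part p i| <= INR n / (2 * INR l)).
  apply: Rle_trans rp; apply: Rle_trans hbi.
  by rewrite Rabs_minus_sym; apply: Rle_abs.
have h2 : (INR n <= 2 * INR l * INR #|part p i|).
  have e1 : (INR n / INR l = 2 * (INR n / (2 * INR l))) by field; lra.
  have e2 : (INR n = 2 * INR l * (INR n / (2 * INR l))) by field; lra.
  have h3 : (INR n / (2 * INR l) <= INR #|part p i|) by lra.
  rewrite {1}e2; apply: Rmult_le_compat_l; lra.
apply/leP; apply: INR_le; rewrite !mult_INR; exact: h2.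
Qed.

End RS.

Lemma hS_of (T : graph_family) (hT : hereditary T) n (G : graph n) k
   mS (S : graph mS) mA (A : graph mA) :
  simple G -> simple S -> substar S -> ~~ T mS S ->
  simple A -> antisubstar A -> ~~ T mA A -> mS <= k -> mA <= k ->
  forall (Y H : {set 'I_n}) w, H \subset Y -> w \in Y -> w \notin H -> homs G H ->
    good k G w H -> ~~ T _ (sub G Y).
Proof.
move=> sG sS [cS hcS] nTS sA [cA hcA] nTA kS kA Y H w HY wY wH /orP [hH|hH] /andP[g1 g2].
- have s1 : forall x y, x != cA -> y != cA -> x != y -> A (x, y) = true.
    move=> x y xc yc xy; apply/negPn/negP => nA.
    have := hcA x y; rewrite ffunE /= xy nA => /(_ isT) [/eqP|/eqP];
      by rewrite ?(negbTE xc) ?(negbTE yc).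
  have s2 : forall x y, x \in H -> y \in H -> x != y -> G (x, y) = true.
    by move=> x y xH yH xy; apply: (homP hH).
  have [g [ig gY eg]] := @embed_gen n G Y H w mA A cA true sG sA s1 s2 HY wY wH
    (leq_trans kA g1) (leq_trans kA g2).
  exact: (@notT_sub T hT n G Y mA A g sG ig gY eg nTA).
- have s1 : forall x y, x != cS -> y != cS -> x != y -> S (x, y) = false.
    move=> x y xc yc xy; apply/negbTE/negP => sxy.
    by have := hcS x y sxy => -[/eqP|/eqP]; rewrite ?(negbTE xc) ?(negbTE yc).
  have s2 : forall x y, x \in H -> y \in H -> x != y -> G (x, y) = false.
    by move=> x y xH yH xy; apply: (homP hH).
  have [g [ig gY eg]] := @embed_gen n G Y H w mS S cS false sG sS s1 s2 HY wY wH
    (leq_trans kS g1) (leq_trans kS g2).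
  exact: (@notT_sub T hT n G Y mS S g sG ig gY eg nTS).
Qed.

Section Count.
Variables (n l : nat) (p : {ffun 'I_n -> 'I_l}) (Gs : forall i : 'I_l, graph #|part p i|)
  (k h c d L : nat) (fam : 'I_l -> {set {set 'I_n}}).
Local Notation EX := (@Ex n l p Gs).
Hypothesis h0 : 0 < h.
Hypothesis hbad : 2 * (k * h ^ k) * 2 ^ c <= 2 ^ h.

Lemma bad_bound (D : {set 'I_n * 'I_n}) : #|D| = h -> #|badset k D| * 2 ^ c <= 2 ^ #|D|.
Proof.
move=> cD; rewrite cD; apply: leq_trans _ hbad; rewrite leq_mul2r; apply/orP; right.
by rewrite -cD; apply: badset_card; rewrite cD.
Qed.

Lemma badset_sub (D : {set 'I_n * 'I_n}) : badset k D \subset powerset D.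
Proof. by apply/subsetP=> S; rewrite inE => /andP[]. Qed.

Lemma Dw_mem (w : 'I_n) H e : e \in Dw w H -> e.1 = w /\ e.2 \in H.
Proof. by move/imsetP=> [x xH ->]. Qed.

Definition Ev1 (u : 'I_l * {set 'I_n} * {set 'I_n}) : {set graph n} :=
  let: (i', H, W) := u in
  if [&& #|H| == h, [disjoint H & part p i'], W \subset part p i' & n < d * #|W|]
  then [set G in EX | all (fun w => restr (Dw w H) G \in badset k (Dw w H)) (enum W)]
  else set0.

Lemma count1 u : c = 3 * d -> #|Ev1 u| * 2 ^ (3 * n) <= #|EX|.
Proof.
move=> hc; case: u => [[i' H] W]; rewrite /Ev1.
case: ifP => [/and4P [/eqP cH dH WP nW]|_]; last by rewrite cards0.
set E1 := [set G in EX | _].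
apply: (@leq_trans (#|E1| * 2 ^ (c * size (enum W)))).
  rewrite leq_mul2l; apply/orP; right; apply: leq_pexp2l => //.
  by rewrite -cardE hc; lia.
rewrite /E1; apply: (@blocks n EX _ (fun w => Dw w H) (fun w => badset k (Dw w H)) c (enum W)).
- exact: enum_uniq.
- by move=> x _; apply: badset_sub.
- by move=> x _; apply: bad_bound; rewrite card_Dw.
- move=> x y e xW yW /Dw_mem [e1 e2]; apply/negP=> /Dw_mem [/= e3 _].
  move: yW; rewrite mem_enum => /(subsetP WP); rewrite -e3 => zP.
  by move: (disjointFr dH e2); rewrite zP.
- move=> x y xW yW xy; rewrite -setI_eq0; apply/eqP/setP=> e; rewrite !inE.
  apply/negP=> /andP [/Dw_mem [ex _] /Dw_mem [ey _]].
  by move: xy; rewrite -ex -ey eqxx.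
- move=> x G g xW GE gD; apply: toggle_Ex => // e /(subsetP gD) /Dw_mem [e1 e2].
  move: xW; rewrite mem_enum => /(subsetP WP); rewrite inE -e1 => /eqP ->.
  apply/negP=> /eqP ep; have : e.2 \in part p i' by rewrite inE ep.
  by rewrite (disjointFr dH e2).
Qed.

Hypothesis famP0 : forall i (H : {set 'I_n}), H \in fam i -> H \subset part p i /\ #|H| = h.
Hypothesis famD : forall i (H1 H2 : {set 'I_n}), H1 \in fam i -> H2 \in fam i -> H1 != H2 ->
  [disjoint H1 & H2].

Definition Ev2 i v (J : {set {set 'I_n}}) : {set graph n} :=
  if (#|fam i| <= #|J| + L) && (J \subset fam i)
  then [set G in EX | all (fun H => restr (Dw v H) G \in badset k (Dw v H)) (enum J)]
  else set0.

Lemma count2 i v J : p v != i -> 2 <= c ->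
  #|Ev2 i v J| * 2 ^ (2 * #|fam i|) <= #|EX| * 2 ^ (c * L).
Proof.
move=> pv c2; rewrite /Ev2; case: ifP => [/andP [cJ Jf]|_]; last by rewrite cards0.
set E2 := [set G in EX | _].
have b : #|E2| * 2 ^ (c * size (enum J)) <= #|EX|.
  rewrite /E2; apply: (@blocks n EX _ (fun H => Dw v H) (fun H => badset k (Dw v H)) c (enum J)).
  - exact: enum_uniq.
  - by move=> x _; apply: badset_sub.
  - move=> H; rewrite mem_enum => /(subsetP Jf) /famP0 [_ cH].
    by apply: bad_bound; rewrite card_Dw.
  - move=> x y e xJ yJ /Dw_mem [e1 e2]; apply/negP=> /Dw_mem [/= e3 _].
    move: xJ; rewrite mem_enum => /(subsetP Jf) /famP0 [xP _].
    have := subsetP xP _ e2; rewrite e3 inE => /eqP pvi.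
    by rewrite pvi eqxx in pv.
  - move=> x y xJ yJ xy; rewrite -setI_eq0; apply/eqP/setP=> e; rewrite !inE.
    apply/negP=> /andP [/Dw_mem [_ ex] /Dw_mem [_ ey]].
    move: xJ yJ; rewrite !mem_enum => /(subsetP Jf) xf /(subsetP Jf) yf.
    by move: (famD xf yf xy) => /disjointFr /(_ ex); rewrite ey.
  - move=> x G g xJ GE gD; apply: toggle_Ex => // e /(subsetP gD) /Dw_mem [e1 e2].
    move: xJ; rewrite mem_enum => /(subsetP Jf) /famP0 [xP _].
    have := subsetP xP _ e2; rewrite inE => /eqP ->; by rewrite e1.
rewrite -cardE in b.
apply: leq_trans (_ : #|E2| * (2 ^ (c * #|J|) * 2 ^ (c * L)) <= _).
  rewrite leq_mul2l -expnD leq_pexp2l ?orbT //; nia.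
by rewrite mulnA leq_mul2r b orbT.
Qed.

Definition X2 i v := [set G in EX | #|[set H in fam i | good k G v H]| <= L].

Lemma count2u i v : p v != i -> 2 <= c ->
  #|X2 i v| * 2 ^ #|fam i| <= #|EX| * 2 ^ (c * L).
Proof.
move=> pv c2.
have u := @union_bound _ _ (X2 i v) (Ev2 i v) (powerset (fam i)) (2 ^ (2 * #|fam i|))
  (#|EX| * 2 ^ (c * L)).
have : #|X2 i v| * 2 ^ (2 * #|fam i|) <= #|powerset (fam i)| * (#|EX| * 2 ^ (c * L)).
  apply: u; last by move=> J _; apply: count2.
  move=> G; rewrite inE => /andP [GE gL].
  exists [set H in fam i | ~~ good k G v H]; split.
    by rewrite powersetE; apply/subsetP=> H; rewrite inE => /andP[].
  rewrite /Ev2.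
  have -> : #|fam i| <= #|[set H in fam i | ~~ good k G v H]| + L.
    have e := cardsID [set H | good k G v H] (fam i).
    have e1 : #|fam i :&: [set H | good k G v H]| = #|[set H in fam i | good k G v H]|.
      by apply: eq_card => H; rewrite !inE.
    have e2 : #|fam i :\: [set H | good k G v H]| = #|[set H in fam i | ~~ good k G v H]|.
      by apply: eq_card => H; rewrite !inE andbC.
    move: e e1 e2 gL; set a1 := #|fam i :&: _|; set a2 := #|fam i :\: _|; set a3 := #|[set H in fam i | good k G v H]|; set a4 := #|[set H in fam i | ~~ good k G v H]|; set a5 := #|fam i|; lia.
  have -> : [set H in fam i | ~~ good k G v H] \subset fam i.
    by apply/subsetP=> H; rewrite inE => /andP[].
  rewrite /= inE GE /=; apply/allP=> H; rewrite mem_enum inE => /andP [_ ng].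
  by move: ng; rewrite goodE negbK.
rewrite card_powerset mul2n -addnn expnD mulnA.
move=> hh; rewrite -(@leq_pmul2r (2 ^ #|fam i|)) ?expn_gt0 // [X in _ <= X]mulnC.
exact: hh.
Qed.

End Count.

Lemma card_sets n : #|{set 'I_n}| = 2 ^ n.
Proof.
have := card_powerset [set: 'I_n]; rewrite cardsT card_ord => <-.
by apply: eq_card => A; rewrite powersetE subsetT.
Qed.

Lemma homs_ext n (G G' : graph n) (H : {set 'I_n}) :
  (forall x y, x \in H -> y \in H -> G (x, y) = G' (x, y)) -> homs G H = homs G' H.
Proof.
move=> e; rewrite /homs /hom.
have f : forall b, [forall x, forall y, (x \in H) && (y \in H) && (x != y) ==> (G (x, y) == b)] =
                   [forall x, forall y, (x \in H) && (y \in H) && (x != y) ==> (G' (x, y) == b)].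
  move=> b; apply: eq_forallb => x; apply: eq_forallb => y.
  by case xH: (x \in H); case yH: (y \in H) => //=; rewrite e.
by rewrite !f.
Qed.

Section RF.
Local Open Scope R_scope.
Lemma real_final (E B G' K : nat) (eta : R) :
  (E = G' + B)%N -> (B * K <= E)%N -> Rle 1 (INR K * eta) -> Rlt 0 eta ->
  Rle (Rmult (Rminus R1 eta) (INR E)) (INR G').
Proof.
move=> eE hB hK he.
have hB' : Rle (INR B * INR K) (INR E) by rewrite -mult_INR; apply: le_INR; apply/leP.
have eE' : INR E = Rplus (INR G') (INR B) by rewrite eE plus_INR.
have b0 : Rle 0 (INR B) by apply: pos_INR.
have e0 : Rle 0 (INR E) by apply: pos_INR.
have h1 : INR B * 1 <= INR B * (INR K * eta) by apply: Rmult_le_compat_l.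
have h2 : INR B * INR K * eta <= INR E * eta by apply: Rmult_le_compat_r; lra.
rewrite -Rmult_assoc in h1.
lra.
Qed.
End RF.

Theorem lemma2p12 (T : graph_family) (hT : hereditary T) (mT : meager T)
  (l : nat) (hl : 0 < l) (eps : R) (heps : Rlt R0 eps) :
  forall eta : R, Rlt R0 eta ->
  exists n0 : nat, forall n : nat, n0 <= n ->
  forall (p : {ffun 'I_n -> 'I_l}) (Gs : forall i : 'I_l, graph #|part p i|),
    (forall i, simple (Gs i)) ->
    (forall i, T _ (Gs i)) ->
    balanced eps p ->
    Rle (Rmult (Rminus R1 eta) (INR #|[set G : graph n | @extension n l p Gs G]|))
        (INR #|[set G : graph n | @extension n l p Gs G && unique_Fl_partition T G p]|).
Proof.
move=> eta heta.
case: mT => _ [[mS [S [sS [ssS nTS]]]] [mA [A [sA [saA nTA]]]]].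
set k := maxn mS mA.
have kS : mS <= k by apply: leq_maxl.
have kA : mA <= k by apply: leq_maxr.
set d := 4 * l * l.
set c := 3 * d.
have [h [h0 hh]] := poly_exp (2 * k * 2 ^ c) k.
have hbad : 2 * (k * h ^ k) * 2 ^ c <= 2 ^ h.
  by move: hh; set X := h ^ k; set Y := 2 ^ c; set Z := 2 ^ h; nia.
set R := 2 ^ (h + h).
set L := l * R.
have [K [K1 hK]] : exists K, 0 < K /\ Rle 1 (INR K * eta).
  have [K hK] := INR_unbounded (/ eta).
  exists K; split.
    case: K hK => [|K] //= hK; exfalso; have := Rinv_0_lt_compat _ heta; lra.
  have : Rlt 1 (INR K * eta).
    have := Rmult_lt_compat_r eta _ _ heta hK.
    by rewrite Rinv_l; [lra|lra].
  lra.
have [N1 hN1] := balanced_size hl heps.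
have [m0 hm0] := lin_exp (2 * K * l).
set B0 := 2 * K * l * 2 ^ (c * L).
have [m1 hm1] := lin_exp (B0 * (2 * l * h + 2 * l * R)).
exists (N1 + d * R + m0 + 2 * l * (h * m1 + R) + 1).
move=> n hn p Gs sGs TGs bal.
have sz := hN1 n (leq_trans (leq_addr _ _) (leq_trans (leq_addr _ _) (leq_trans (leq_addr _ _) (leq_trans (leq_addr _ _) hn)))) p bal.
have n1 : 0 < n by lia.
have nR : d * R <= n by lia.
have big1 : 2 * K * l <= 2 ^ n.
  have := hm0 n ltac:(lia); nia.
rewrite -[[set G : graph n | @extension n l p Gs G]]/(@Ex n l p Gs).
case: (set_0Vmem (@Ex n l p Gs)) => [E0|[G0 G0E]].
  rewrite E0 cards0 /= Rmult_0_r; exact: pos_INR.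
have sG0 : simple G0 by move: G0E; rewrite inE => /andP[].
have [fam famS] := fin_all_exists (fun i : 'I_l => greedy sG0 h0 (part p i)).
have famP0 : forall i (H : {set 'I_n}), H \in fam i -> H \subset part p i /\ #|H| = h.
  by move=> i H; case: (famS i) => f _ _ /f [].
have famD : forall i (H1 H2 : {set 'I_n}), H1 \in fam i -> H2 \in fam i -> H1 != H2 ->
    [disjoint H1 & H2].
  by move=> i; case: (famS i).
have famsz : forall i, #|part p i| <= #|fam i| * h + R by move=> i; case: (famS i).
have famH : forall i (H : {set 'I_n}), H \in fam i -> homs G0 H.
  by move=> i H; case: (famS i) => f _ _ /f [].
have Mbig : forall i, B0 * n <= 2 ^ #|fam i|.
  move=> i; have s1 := sz i; have s2 := famsz i.
  have Mm : m1 <= #|fam i|.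
    rewrite leqNgt; apply/negP=> lt.
    have : #|fam i| * h <= h * m1 by rewrite mulnC leq_mul2l ltnW ?orbT.
    nia.
  have := hm1 _ Mm.
  apply: leq_trans; rewrite -mulnA leq_mul2l; apply/orP; right.
  nia.
have uniq_of : forall G, G \in Ex Gs -> (forall u, G \notin Ev1 Gs k h d u) ->
    (forall i v, p v != i -> G \notin X2 Gs k L fam i v) -> unique_Fl_partition T G p.
  move=> G GE n1' n2.
  have GE' := GE; rewrite inE in GE'; case/andP: GE' => sG /forallP hsub.
  have FLp : Fl_partition T G p by apply/forallP=> i; rewrite (eqP (hsub i)); exact: TGs.
  rewrite /unique_Fl_partition FLp /=; apply/forallP=> q; apply/implyP=> Fq.
  apply/forallP=> x; apply/forallP=> y.
  apply: (@det T n l p G k h d L fam sG _ _ _ _ famD sz erefl n1 nR (leqnn _) q Fq x y).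
  - exact: (hS_of hT sG sS ssS nTS sA saA nTA kS kA).
  - move=> i' H W cH dH WP nW.
    have := n1' (i', H, W); rewrite /Ev1 cH eqxx dH WP nW /= inE GE /= => /allPn [w wW bw].
    by exists w; rewrite ?mem_enum // in wW *; rewrite goodE.
  - by move=> i v pv; have := n2 i v pv; rewrite inE GE /= -ltnNge.
  - move=> i H Hf; have [sub cH] := famP0 i H Hf; split => //.
    rewrite (homs_ext (G' := G0)); first exact: famH Hf.
    move=> x0 y0 xH yH; apply: (@ext_agree n l p Gs) => //.
    by have := subsetP sub x0 xH; have := subsetP sub y0 yH; rewrite !inE => /eqP -> /eqP ->.
have hc : c = 3 * d by [].
set X1 := [set G in Ex Gs | [exists u, G \in Ev1 Gs k h d u]].
have cX1 : #|X1| * (2 * K) <= #|Ex Gs|.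
  have u1 := @union_bound _ _ X1 (Ev1 Gs k h d) setT (2 ^ (3 * n)) #|Ex Gs|.
  have : #|X1| * 2 ^ (3 * n) <= #|[set: 'I_l * {set 'I_n} * {set 'I_n}]| * #|Ex Gs|.
    apply: u1; last by move=> u _; exact: (count1 Gs h0 hbad u hc).
    by move=> G; rewrite inE => /andP [_ /existsP [u Gu]]; exists u.
  rewrite cardsT !card_prod card_ord card_sets.
  have e3 : 2 ^ (3 * n) = 2 ^ n * 2 ^ n * 2 ^ n by rewrite -!expnD; congr (_ ^ _); lia.
  rewrite e3 => hX.
  have hX' : #|X1| * 2 ^ n <= l * #|Ex Gs|.
    rewrite -(@leq_pmul2r (2 ^ n * 2 ^ n)) ?muln_gt0 ?expn_gt0 //.
    move: hX; set a := 2 ^ n; set b := #|X1|; set e := #|Ex Gs|; nia.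
  rewrite -(@leq_pmul2r l) //.
  apply: leq_trans (_ : #|X1| * 2 ^ n <= _); last by rewrite [_ * l]mulnC.
  by rewrite -mulnA leq_mul2l big1 orbT.
have c2 : 2 <= c by rewrite /c /d; nia.
set XX2 := [set G in Ex Gs | [exists iv : 'I_l * 'I_n,
                 (p iv.2 != iv.1) && (G \in X2 Gs k L fam iv.1 iv.2)]].
have cXX2 : #|XX2| * (2 * K) <= #|Ex Gs|.
  set I2 := [set iv : 'I_l * 'I_n | p iv.2 != iv.1].
  have u2 := @union_bound _ _ XX2 (fun iv : 'I_l * 'I_n => X2 Gs k L fam iv.1 iv.2) I2
     (2 * K * l * n) #|Ex Gs|.
  have : #|XX2| * (2 * K * l * n) <= #|I2| * #|Ex Gs|.
    apply: u2.
      move=> G; rewrite inE => /andP [_ /existsP [iv /andP [pv Gx]]].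
      by exists iv; rewrite inE pv.
    move=> [i v]; rewrite inE /= => pv.
    have cc := count2u Gs L h0 hbad famP0 famD pv c2.
    rewrite -(@leq_pmul2r (2 ^ (c * L))) ?expn_gt0 //.
    apply: leq_trans cc.
    have e : #|X2 Gs k L fam i v| * (2 * K * l * n) * 2 ^ (c * L) =
             #|X2 Gs k L fam i v| * (B0 * n).
      by rewrite /B0; set a := #|X2 Gs k L fam i v|; set b := 2 ^ (c * L); nia.
    by rewrite e leq_mul2l Mbig orbT.
  have cardI : #|I2| <= l * n.
    by apply: leq_trans (max_card _) _; rewrite card_prod !card_ord.
  move=> hX.
  have ln0 : 0 < l * n by rewrite muln_gt0 hl n1.
  rewrite -(@leq_pmul2r (l * n)) //.
  apply: leq_trans (_ : #|I2| * #|Ex Gs| <= _).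
    by move: hX; set a := #|XX2|; nia.
  by rewrite mulnC leq_mul2l cardI orbT.
set U := [set G : graph n | unique_Fl_partition T G p].
set Bd := Ex Gs :\: U.
have BdX : Bd \subset X1 :|: XX2.
  apply/subsetP=> G; rewrite in_setD => /andP [nu GE].
  have ext : extension Gs G by rewrite inE in GE.
  apply/negPn/negP; rewrite in_setU negb_or => /andP [n1' n2'].
  move: nu; rewrite inE (uniq_of G GE) //.
    move=> u; apply/negP => Gu; move: n1'; rewrite !inE ext /= => /negP; apply; apply/existsP; by exists u.
  move=> i v pv; apply/negP => Gx; move: n2'; rewrite !inE ext /= => /negP; apply.
  by apply/existsP; exists (i, v); rewrite /= pv Gx.
have cBd : #|Bd| * K <= #|Ex Gs|.
  have := subset_leq_card BdX; have := (leq_card_setU X1 XX2).1.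
  move: cX1 cXX2; set a := #|Bd|; set b := #|X1|; set e := #|XX2|; set f := #|Ex Gs|;
    set g := #|X1 :|: XX2|; nia.
apply: (real_final (G' := #|[set G : graph n | @extension n l p Gs G && unique_Fl_partition T G p]|)
   (B := #|Bd|) _ cBd hK heta).
rewrite -(cardsID U (Ex Gs)) /Bd; congr (_ + _).
by apply: eq_card => G; rewrite !inE.
Qed.
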